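(* Let $m>0$ and let $U:[0,\infty)\to\mathbb{R}$ satisfy: $U\in C^{2}((0,\infty))\cap C^{1}([0,\infty))$, $U(0)=0$, $U'(q)>0$ for all $q>0$, and for each $E>0$ there is a unique $q_{\max}(E)>0$ with $U(q_{\max}(E))=E$. Consider trajectories $q(t)\ge 0$ of the conservative system $m\ddot q+U'(q)=0$, which conserve the energy $E=\frac12 m\dot q^2+U(q)$. Fix arbitrary constants $K>0$ and $M>0$. Define the energy coordinate \[ x(q)=\sqrt{\frac{2U(q)}{K}}, \] and define a reparametrised time $\tau$ along the trajectory by \[ \frac{d\tau}{dt}=\sqrt{\frac{M}{m}}\,\frac{dx}{dq}(q(t)). \] Then along every nontrivial conservative trajectory, $x$ as a function of $\tau$ satisfies \[ M\frac{d^{2}x}{d\tau^{2}}+Kx=0 . \]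
   Context: $q$ is the contact penetration, $m$ the mass, $U$ the contact potential; a nontrivial trajectory is one with energy $E>0$. *)

(* Defs.v *)
From Stdlib Require Import Reals.
From Coquelicot Require Import Coquelicot.
Open Scope R_scope.

Definition xcoord (K : R) (U : R -> R) (r : R) : R := sqrt (2 * U r / K).

(* Standing assumptions on the contact potential U : [0,oo) -> R, with
   U1 playing the role of U':
   - U in C^2((0,oo)): U' = U1 on (0,oo), U1 differentiable there with a
     continuous derivative U2;
   - U in C^1([0,oo)): U continuous from the right at 0 with right derivative
     U1 0 at 0, and U1 right-continuous at 0;
   - U(0) = 0, U'(q) > 0 for q > 0;
   - for every E > 0 there is a unique q_max(E) > 0 with U(q_max(E)) = E. *)
Definition admissible_potential (U U1 : R -> R) : Prop :=
  (exists U2 : R -> R,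
     forall r, 0 < r ->
       is_derive U r (U1 r) /\ is_derive U1 r (U2 r) /\ continuous U2 r) /\
  filterlim U (at_right 0) (locally (U 0)) /\
  filterlim (fun h => (U h - U 0) / h) (at_right 0) (locally (U1 0)) /\
  filterlim U1 (at_right 0) (locally (U1 0)) /\
  U 0 = 0 /\
  (forall r, 0 < r -> 0 < U1 r) /\
  (forall E, 0 < E -> exists! qm, 0 < qm /\ U qm = E).

(* Main.v *)
Require Import Defs.
From Stdlib Require Import Reals Lra.
From Coquelicot Require Import Coquelicot.
Open Scope R_scope.

Lemma U_pos (U U1 : R -> R) : admissible_potential U U1 ->
  forall r, 0 < r -> 0 < U r.
Proof.
intros [[U2 HU2] [Hc [_ [_ [H0 [Hp _]]]]]] r Hr.
assert (mono : forall s t, 0 < s -> s < t -> U s < U t).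
{ intros s t Hs Hst.
  destruct (MVT_cor2 U U1 s t Hst) as [c [Hc1 Hc2]].
  - intros c Hc'. apply is_derive_Reals. apply HU2. lra.
  - assert (0 < U1 c) by (apply Hp; lra). nra. }
destruct (Rle_or_lt (U r) 0) as [Hle|Hgt]; [|exact Hgt].
exfalso.
assert (Hh : U (r/2) < 0) by (pose proof (mono (r/2) r ltac:(lra) ltac:(lra)); lra).
pose proof (proj1 (filterlim_locally (F:=at_right 0) U (U 0)) Hc) as Hc0; clear Hc; rename Hc0 into Hc.
specialize (Hc (mkposreal (- U (r/2)) ltac:(lra))).
destruct Hc as [delta Hd].
set (y := Rmin (delta/2) (r/4)).
assert (Hy0 : 0 < y) by (unfold y; destruct delta; simpl; apply Rmin_glb_lt; lra).
assert (Hy1 : y <= delta/2) by apply Rmin_l.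
assert (Hy2 : y <= r/4) by apply Rmin_r.
assert (Hb : ball 0 delta y).
{ unfold ball; simpl; unfold AbsRing_ball, abs, minus, plus, opp; simpl.
  rewrite Rabs_right; destruct delta; simpl in *; lra. }
specialize (Hd y Hb Hy0).
unfold ball in Hd; simpl in Hd; unfold AbsRing_ball, abs, minus, plus, opp in Hd; simpl in Hd.
rewrite H0 in Hd.
pose proof (mono y (r/2) Hy0 ltac:(lra)).
apply Rabs_def2 in Hd. lra.
Qed.

Lemma dmult (f g : R -> R) x a b : is_derive f x a -> is_derive g x b -> is_derive (fun t => f t * g t) x (a * g x + f x * b).
Proof. intros H H0. exact (is_derive_mult f g x a b H H0 Rmult_comm). Qed.
Lemma dcomp (f g : R -> R) x a b : is_derive f (g x) a -> is_derive g x b -> is_derive (fun t => f (g t)) x (b * a).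
Proof. intros H H0. exact (is_derive_comp f g x a b H H0). Qed.
Lemma dminus (f g : R -> R) x a b : is_derive f x a -> is_derive g x b -> is_derive (fun t => f t - g t) x (a - b).
Proof. intros H H0. exact (is_derive_minus f g x a b H H0). Qed.
Lemma dplus (f g : R -> R) x a b : is_derive f x a -> is_derive g x b -> is_derive (fun t => f t + g t) x (a + b).
Proof. intros H H0. exact (is_derive_plus f g x a b H H0). Qed.
Lemma deq (f : R -> R) (x a b : R) : is_derive f x a -> @eq R a b -> is_derive f x b.
Proof. intros H ->; exact H. Qed.

Lemma xderiv (K : R) (U U1 : R -> R) r : 0 < K -> is_derive U r (U1 r) -> 0 < U r ->
  is_derive (xcoord K U) r (U1 r / (K * xcoord K U r)).
Proof.
intros HK HD Hu.
assert (H2 : 0 < 2 * U r / K) by (apply Rdiv_lt_0_compat; lra).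
assert (Hd : is_derive (fun r => 2 * U r / K) r (2 * U1 r / K)).
{ apply (is_derive_ext (fun r => / K * (2 * U r))).
  { intro t; unfold Rdiv; apply Rmult_comm. }
  apply (deq _ _ (/K * (2 * U1 r))); [|field; lra].
  apply is_derive_scal. apply is_derive_scal. exact HD. }
assert (Hs : 0 < sqrt (2 * U r / K)) by (apply sqrt_lt_R0; exact H2).
unfold xcoord.
apply (deq _ _ ((2 * U1 r / K) / (2 * sqrt (2 * U r / K)))).
- exact (is_derive_sqrt (fun r => 2 * U r / K) r _ Hd H2).
- field. split; lra.
Qed.

Ltac req := match goal with |- ?l = ?r => change (@eq R l r) end; ring.

Lemma const_on (W : R -> R) a b t0 : (forall t, a < t < b -> is_derive W t 0) ->
  a < t0 < b -> forall t, a < t < b -> W t = W t0.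
Proof.
intros HW H0 t Ht.
destruct (Rtotal_order t t0) as [Hl|[He|Hg]].
- destruct (MVT_cor2 W (fun _ => 0) t t0 Hl) as [c [Hc _]].
  + intros c Hc. apply is_derive_Reals. apply HW. lra.
  + lra.
- subst; reflexivity.
- destruct (MVT_cor2 W (fun _ => 0) t0 t Hg) as [c [Hc _]].
  + intros c Hc. apply is_derive_Reals. apply HW. lra.
  + lra.
Qed.

Theorem theorem2
  (m K M : R) (U U1 : R -> R) (a b E : R) (q v acc tau : R -> R) :
  0 < m -> 0 < K -> 0 < M ->
  admissible_potential U U1 ->
  a < b ->
  (forall t, a < t < b ->
     0 <= q t /\ is_derive q t (v t) /\ is_derive v t (acc t) /\
     m * acc t + U1 (q t) = 0) ->
  0 < E ->
  (forall t, a < t < b -> / 2 * m * (v t) ^ 2 + U (q t) = E) ->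
  (forall t, a < t < b ->
     is_derive tau t (sqrt (M / m) * Derive (xcoord K U) (q t))) ->
  exists X X1 X2 : R -> R,
    forall t, a < t < b ->
      X (tau t) = xcoord K U (q t) /\
      is_derive X (tau t) (X1 (tau t)) /\
      is_derive X1 (tau t) (X2 (tau t)) /\
      M * X2 (tau t) + K * X (tau t) = 0.
Proof.
intros Hm HK HM HU Hab Htr HE Hen Htau.
pose proof (U_pos U U1 HU) as HUp.
destruct HU as [[U2 HU2] [_ [_ [_ [H0 [Hp _]]]]]].
assert (Hq : forall t, a < t < b -> 0 < q t).
{ intros t Ht. destruct (Htr t Ht) as [Hq0 [Hdq _]].
  destruct Hq0 as [|Hq0]; [assumption|exfalso].
  assert (Hv : v t = 0).
  { pose proof (proj1 (is_derive_Reals q t (v t)) Hdq) as Hl.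
    pose proof (deriv_minimum q a b t (exist _ (v t) Hl) (proj1 Ht) (proj2 Ht)) as Hmin.
    apply Hmin. intros y Hy1 Hy2. rewrite <- Hq0. apply (Htr y). lra. }
  pose proof (Hen t Ht) as He. rewrite <- Hq0, H0, Hv in He. lra. }
set (s := sqrt (M / m)).
assert (Hs : 0 < s) by (apply sqrt_lt_R0; apply Rdiv_lt_0_compat; lra).
assert (Hss : s * s = M / m) by (apply sqrt_sqrt; apply Rlt_le, Rdiv_lt_0_compat; lra).
set (w := sqrt (K / M)).
assert (Hw : 0 < w) by (apply sqrt_lt_R0; apply Rdiv_lt_0_compat; lra).
assert (Hww : w * w = K / M) by (apply sqrt_sqrt; apply Rlt_le, Rdiv_lt_0_compat; lra).
set (x := xcoord K U).
set (d := fun r => U1 r / (K * x r)).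
assert (Hx : forall t, a < t < b -> 0 < x (q t)).
{ intros t Ht. unfold x, xcoord. apply sqrt_lt_R0. apply Rdiv_lt_0_compat; [|lra].
  pose proof (HUp (q t) (Hq t Ht)); lra. }
assert (Hxx : forall t, a < t < b -> x (q t) * x (q t) = 2 * U (q t) / K).
{ intros t Ht. unfold x, xcoord. apply sqrt_sqrt. apply Rlt_le, Rdiv_lt_0_compat; [|lra].
  pose proof (HUp (q t) (Hq t Ht)); lra. }
assert (Hdx : forall t, a < t < b -> is_derive x (q t) (d (q t))).
{ intros t Ht. apply xderiv; [lra| apply HU2, Hq, Ht | apply HUp, Hq, Ht]. }
assert (Htau' : forall t, a < t < b -> is_derive tau t (s * d (q t))).
{ intros t Ht. pose proof (Htau t Ht) as H. change (xcoord K U) with x in H. fold s in H. rewrite (is_derive_unique _ _ _ (Hdx t Ht)) in H. exact H. }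
set (t0 := (a + b) / 2).
assert (Ht0 : a < t0 < b) by (unfold t0; lra).
set (s0 := tau t0).
set (A := x (q t0)).
set (B := v t0 / (s * w)).
set (X := fun y => A * cos (w * (y - s0)) + B * sin (w * (y - s0))).
set (X1 := fun y => w * (- A * sin (w * (y - s0)) + B * cos (w * (y - s0)))).
set (X2 := fun y => - (w * w) * X y).
assert (HX : forall y, is_derive X y (X1 y)).
{ intro y. unfold X, X1. auto_derive; [exact I|unfold Rminus; req]. }
assert (HX1 : forall y, is_derive X1 y (X2 y)).
{ intro y. unfold X2, X, X1. auto_derive; [exact I|unfold Rminus; req]. }
set (D := fun t => X (tau t) - x (q t)).
set (P := fun t => X1 (tau t) - v t / s).
set (W := fun t => M * (P t * P t) + K * (D t * D t)).
assert (HW : forall t, a < t < b -> is_derive W t 0).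
{ intros t Ht.
  destruct (Htr t Ht) as [_ [Hdq [Hdv Hacc]]].
  assert (HD : is_derive D t (s * d (q t) * X1 (tau t) - v t * d (q t))).
  { apply dminus. apply (dcomp X tau). apply HX. apply Htau', Ht.
    apply (dcomp x q). apply Hdx, Ht. exact Hdq. }
  assert (HP : is_derive P t (s * d (q t) * X2 (tau t) - acc t / s)).
  { apply dminus. apply (dcomp X1 tau). apply HX1. apply Htau', Ht.
    apply (deq (fun t => v t * / s) _ (acc t * / s)); [|reflexivity].
    apply (deq _ _ (acc t * / s + v t * 0)); [|ring].
    apply (dmult v (fun _ => / s)). exact Hdv. exact (is_derive_const (V:=R_NormedModule) (/ s) t). }
  set (dP := s * d (q t) * X2 (tau t) - acc t / s) in HP.
  set (dD := s * d (q t) * X1 (tau t) - v t * d (q t)) in HD.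
  apply (deq _ _ (M * (dP * P t + P t * dP) + K * (dD * D t + D t * dD))).
  { unfold W. apply (dplus (fun t => M * (P t * P t)) (fun t => K * (D t * D t))).
    - apply (is_derive_scal (fun t => P t * P t)). apply (dmult P P); exact HP.
    - apply (is_derive_scal (fun t => D t * D t)). apply (dmult D D); exact HD. }
  assert (Ha0 : acc t = - U1 (q t) / m) by (field_simplify_eq; nra).
  assert (Hm' : m = M / (s * s)) by (rewrite Hss; field; lra).
  pose proof (Hx t Ht) as Hxp.
  unfold dP, dD, P, D, X2. rewrite Ha0, Hww, Hm'. unfold d.
  field. repeat split; lra. }
assert (HW0 : W t0 = 0).
{ unfold W, P, D, X1, X. fold s0. rewrite Rminus_diag, Rmult_0_r, sin_0, cos_0.
  unfold A, B. field_simplify; try reflexivity; lra. }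
exists X, X1, X2. intros t Ht.
split; [|split; [apply HX|split; [apply HX1|]]].
- pose proof (const_on W a b t0 HW Ht0 t Ht) as H. rewrite HW0 in H.
  unfold W in H. assert (HD0 : D t = 0).
  { assert (h1 : 0 <= M * (P t * P t)) by (apply Rmult_le_pos; [lra|apply Rle_0_sqr]).
    assert (h2 : 0 <= K * (D t * D t)) by (apply Rmult_le_pos; [lra|apply Rle_0_sqr]).
    assert (h3 : K * (D t * D t) = 0) by lra.
    apply Rmult_integral in h3. destruct h3 as [h3|h3]; [lra|].
    apply Rmult_integral in h3. destruct h3; assumption. }
  unfold D in HD0. lra.
- unfold X2. rewrite Hww. field. lra.
Qed.
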